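(* Let $\mathcal{B}$ be a building set on $[d]$ that is $\triangle$-closed, i.e. for all $I,J\in\mathcal{B}$ with $I\not\subseteq J$, $J\not\subseteq I$ and $I\cap J\neq\emptyset$ one has $I\triangle J\in\mathcal{B}$. Then the nestohedron $\Delta_{\mathcal{B}}$ is inscribed.
   Context: A building set is a collection $\mathcal{B}$ of subsets of $[d]$ such that $I\cap J\neq\emptyset$ implies $I\cup J\in\mathcal{B}$ for all $I,J\in\mathcal{B}$. $I\triangle J=(I\setminus J)\cup(J\setminus I)$. For $I\subseteq[d]$, $\Delta_I=\mathrm{conv}(e_i:i\in I)$ and $\Delta_{\mathcal{B}}=\sum_{I\in\mathcal{B}}\Delta_I$ (Minkowski sum). A polytope is inscribed if all its vertices lie on a common sphere. *)

(* Defs.v *)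
From HB Require Import structures.
From mathcomp Require Import all_boot all_order all_algebra.
From mathcomp Require Import reals.
Set Implicit Arguments. Unset Strict Implicit. Unset Printing Implicit Defensive.
Import Order.TTheory GRing.Theory Num.Theory.
Local Open Scope ring_scope.

(* Points of R^d are row vectors 'rV[R]_d; [d] is 'I_d (0-indexed). *)

Definition conv (R : numDomainType) (d : nat) (T : finType) (f : T -> 'rV[R]_d)
  (A : {set T}) (x : 'rV[R]_d) : Prop :=
  exists lam : T -> R,
    (forall i, i \in A -> 0 <= lam i) /\
    \sum_(i in A) lam i = 1 /\
    x = \sum_(i in A) lam i *: f i.

Definition ebasis (R : numDomainType) (d : nat) (i : 'I_d) : 'rV[R]_d :=
  delta_mx 0 i.

Definition simplexI (R : numDomainType) (d : nat) (I : {set 'I_d}) : 'rV[R]_d -> Prop :=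
  conv (@ebasis R d) I.

Definition minkowski_sum (R : numDomainType) (d : nat) (B : {set {set 'I_d}})
  (F : {set 'I_d} -> 'rV[R]_d -> Prop) (x : 'rV[R]_d) : Prop :=
  exists p : {set 'I_d} -> 'rV[R]_d,
    (forall I, I \in B -> F I (p I)) /\ x = \sum_(I in B) p I.

Definition nestohedron (R : numDomainType) (d : nat) (B : {set {set 'I_d}}) :
  'rV[R]_d -> Prop := minkowski_sum B (@simplexI R d).

Definition dotv (R : numDomainType) (d : nat) (c x : 'rV[R]_d) : R :=
  \sum_i c 0 i * x 0 i.

Definition is_vertex (R : numDomainType) (d : nat) (P : 'rV[R]_d -> Prop)
  (v : 'rV[R]_d) : Prop :=
  P v /\ exists c : 'rV[R]_d, forall x, P x -> x <> v -> dotv c x < dotv c v.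

Definition inscribed (R : numDomainType) (d : nat) (P : 'rV[R]_d -> Prop) : Prop :=
  exists (c : 'rV[R]_d) (r : R), forall v, is_vertex P v ->
    \sum_i (v 0 i - c 0 i) ^+ 2 = r ^+ 2.

Definition building_set (d : nat) (B : {set {set 'I_d}}) : Prop :=
  forall I J, I \in B -> J \in B -> I :&: J != set0 -> I :|: J \in B.

Definition symdiff (d : nat) (I J : {set 'I_d}) : {set 'I_d} :=
  (I :\: J) :|: (J :\: I).

Definition triangle_closed (d : nat) (B : {set {set 'I_d}}) : Prop :=
  forall I J, I \in B -> J \in B -> ~~ (I \subset J) -> ~~ (J \subset I) ->
    I :&: J != set0 -> symdiff I J \in B.

(* Main.v *)
Require Import Defs.
From mathcomp Require Import all_boot all_order all_algebra.
From mathcomp Require Import reals.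
From mathcomp Require Import ring lra.
Set Implicit Arguments. Unset Strict Implicit. Unset Printing Implicit Defensive.
Import Order.TTheory GRing.Theory Num.Theory.
Local Open Scope ring_scope.

Lemma in_symdiff d (I J : {set 'I_d}) k : (k \in symdiff I J) = (k \in I) (+) (k \in J).
Proof. by rewrite /symdiff !inE; case: (k \in I); case: (k \in J). Qed.

Section Core.
Variables (R : realFieldType) (d : nat) (B : {set {set 'I_d}}).
Variable m : {set 'I_d} -> 'I_d.
Hypothesis Hm1 : forall I, I \in B -> m I \in I.
Hypothesis Hm2 : forall I U, I \in B -> U \in B -> I \subset U -> m U \in I -> m I = m U.
Hypotheses (HB : building_set B) (HT : triangle_closed B).

Definition T I J : R := (m I == m J)%:R - (m I \in J)%:R - (m J \in I)%:R.

Lemma T_sym I J : T I J = T J I.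
Proof. rewrite /T eq_sym; ring. Qed.

Lemma T_sub I J : I \in B -> J \in B -> I \subset J -> T I J = -1.
Proof.
move=> IB JB sIJ; rewrite /T (subsetP sIJ _ (Hm1 IB)).
case E: (m J \in I).
  by rewrite (Hm2 IB JB sIJ E) eqxx /=; lra.
have -> : (m I == m J) = false.
  by apply/eqP => h; rewrite -h (Hm1 IB) in E.
rewrite /=; lra.
Qed.

Lemma T_disj I J : I \in B -> J \in B -> I :&: J == set0 -> T I J = 0.
Proof.
move=> IB JB /eqP dis.
have nI : m J \in I = false.
  apply/negbTE/negP => h; have : m J \in I :&: J by rewrite inE h Hm1.
  by rewrite dis inE.
have nJ : m I \in J = false.
  apply/negbTE/negP => h; have : m I \in I :&: J by rewrite inE h Hm1.
  by rewrite dis inE.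
have ne : (m I == m J) = false.
  by apply/eqP => h; rewrite h (Hm1 JB) in nJ.
rewrite /T nI nJ ne /=; lra.
Qed.

Lemma T_tri_gen (X Y Z : {set 'I_d}) : m X = m Y -> m X \in X -> m Y \in Y -> m X \notin Z ->
  m Z \in Z -> (m Z \in X) != (m Z \in Y) -> T X Y + T Y Z + T Z X = -2.
Proof.
move=> E hX hY nZ hZ xy.
have h1 : m X \in Y by rewrite E.
have h2 : m Y \in X by rewrite -E.
have h3 : m Y \in Z = false by rewrite -E; apply/negbTE.
have h4 : (m Y == m Z) = false by apply/eqP => h; rewrite h hZ in h3.
have h5 : (m Z == m X) = false by rewrite E eq_sym.
rewrite /T h1 h2 h3 h4 h5 (negbTE nZ) E eqxx.
move: xy; case: (m Z \in X); case: (m Z \in Y) => //= _; lra.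
Qed.

Definition Qp (p : {set 'I_d} * {set 'I_d}) := [&& p.1 \in B, p.2 \in B,
  ~~ (p.1 \subset p.2), ~~ (p.2 \subset p.1) & p.1 :&: p.2 != set0].

Definition phi (p : {set 'I_d} * {set 'I_d}) := (p.2, symdiff p.1 p.2).

Lemma phi3 p : phi (phi (phi p)) = p.
Proof.
case: p => I J; rewrite /phi /=; congr pair; apply/setP => k;
by rewrite !in_symdiff; case: (k \in I); case: (k \in J).
Qed.

Lemma phi_inj : injective phi.
Proof. by move=> p q h; rewrite -(phi3 p) -(phi3 q) h. Qed.

Lemma Qp_phi p : Qp p -> Qp (phi p).
Proof.
case: p => I J /and5P [IB JB nIJ nJI IJ0].
have /set0Pn [x /setIP [xI xJ]] := IJ0.
rewrite /Qp /phi /=; apply/and5P; split => //.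
- exact: HT.
- apply/subsetPn; exists x => //; by rewrite in_symdiff xI xJ.
- case/subsetPn: nIJ => y yI yJ; apply/subsetPn; exists y => //.
  by rewrite in_symdiff yI (negbTE yJ).
- case/subsetPn: nJI => y yJ yI; apply/set0Pn; exists y.
  by rewrite inE yJ in_symdiff (negbTE yI) yJ.
Qed.

Lemma Qp_phiE p : Qp (phi p) = Qp p.
Proof.
apply/idP/idP; last exact: Qp_phi.
by move=> h; rewrite -(phi3 p); apply/Qp_phi/Qp_phi.
Qed.

Lemma T_tri p : Qp p -> T p.1 p.2 + T (phi p).1 (phi p).2 + T (phi (phi p)).1 (phi (phi p)).2 = -2.
Proof.
case: p => I J /and5P [IB JB nIJ nJI IJ0]; rewrite /phi /=.
set K := symdiff I J.
have KB : K \in B by apply: HT.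
have UB : I :|: J \in B by apply: HB.
have KU : K \subset I :|: J.
  by apply/subsetP => k; rewrite in_symdiff inE; case: (k \in I); case: (k \in J).
have IU : I \subset I :|: J by apply: subsetUl.
have JU : J \subset I :|: J by apply: subsetUr.
have uU := Hm1 UB.
have mK : forall k, k \in K = (k \in I) (+) (k \in J) by move=> k; rewrite in_symdiff.
have KI : symdiff J K = I.
  by apply/setP => k; rewrite in_symdiff mK; case: (k \in I); case: (k \in J).
rewrite KI.
case eI: (m (I :|: J) \in I); case eJ: (m (I :|: J) \in J).
- have E1 := Hm2 IB UB IU eI; have E2 := Hm2 JB UB JU eJ.
  apply: T_tri_gen.
  + by rewrite E1 E2.
  + exact: Hm1.
  + exact: Hm1.
  + by rewrite mK E1 eI eJ.
  + exact: Hm1.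
  + have := Hm1 KB; rewrite mK; by case: (m K \in I); case: (m K \in J).
- have E1 := Hm2 IB UB IU eI.
  have eK : m (I :|: J) \in K by rewrite mK eI eJ.
  have E2 := Hm2 KB UB KU eK.
  have : T I K + T K J + T J I = -2.
    apply: T_tri_gen.
    + by rewrite E1 E2.
    + exact: Hm1.
    + exact: Hm1.
    + by rewrite E1 eJ.
    + exact: Hm1.
    + have := Hm1 JB; rewrite mK; by case: (m J \in I) => //= ->.
  rewrite (T_sym I K) (T_sym K J) (T_sym J I); lra.
- have E1 := Hm2 JB UB JU eJ.
  have eK : m (I :|: J) \in K by rewrite mK eI eJ.
  have E2 := Hm2 KB UB KU eK.
  have : T J K + T K I + T I J = -2.
    apply: T_tri_gen.
    + by rewrite E1 E2.
    + exact: Hm1.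
    + exact: Hm1.
    + by rewrite E1 eI.
    + exact: Hm1.
    + have := Hm1 IB; rewrite mK => ->; by case: (m I \in J).
  lra.
- by move: uU; rewrite inE eI eJ.
Qed.


Definition comp (p : {set 'I_d} * {set 'I_d}) := (p.1 \subset p.2) || (p.2 \subset p.1).
Definition Cp (p : {set 'I_d} * {set 'I_d}) := [&& p.1 \in B, p.2 \in B & comp p].

Lemma sumQ : \sum_(p | Qp p) T p.1 p.2 = \sum_(p | Qp p) (-2/3 : R).
Proof.
set S := \sum_(p | Qp p) T p.1 p.2.
have e1 : S = \sum_(p | Qp p) T (phi p).1 (phi p).2.
  rewrite /S (reindex_inj phi_inj); apply: eq_bigl => p; exact: Qp_phiE.
have e2 : \sum_(p | Qp p) T (phi p).1 (phi p).2 =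
          \sum_(p | Qp p) T (phi (phi p)).1 (phi (phi p)).2.
  rewrite (reindex_inj phi_inj); apply: eq_bigl => p; exact: Qp_phiE.
have S3 : S *+ 3 = \sum_(p | Qp p) (-2 : R).
  rewrite -(eq_bigr _ (fun p (h : Qp p) => T_tri h)) big_split big_split.
  rewrite -e2 -e1 -/S /=.
  by rewrite !mulrS mulr0n addr0 addrA.
rewrite -mulr_suml -S3 -mulr_natr; by field.
Qed.

Lemma sumT : \sum_(I in B) \sum_(J in B) T I J =
   \sum_(p | Cp p) (-1 : R) + \sum_(p | Qp p) (-2/3 : R).
Proof.
rewrite pair_big /= (bigID comp) /=.
congr (_ + _).
  rewrite (eq_bigl Cp); last by move=> p; rewrite /Cp andbA.
  apply: eq_bigr => -[I J] /and3P [/= IB JB /orP [h|h]].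
    exact: T_sub.
  by rewrite T_sym; apply: T_sub.
rewrite (bigID (fun p => p.1 :&: p.2 == set0)) /= big1 ?add0r.
  rewrite -sumQ; apply: eq_bigl => -[I J]; rewrite /Qp /comp /=.
  by rewrite negb_or; case: (I \in B); case: (J \in B); case: (I \subset J);
    case: (J \subset I).
by move=> -[I J] /andP [/andP [/andP [/= IB JB] _] h]; apply: T_disj.
Qed.

Lemma sum_eqmul (i : 'I_d) (f : 'I_d -> R) : \sum_k (i == k)%:R * f k = f i.
Proof.
rewrite (bigD1 i) //= eqxx mul1r big1 ?addr0 // => k /negbTE.
by rewrite eq_sym => ->; rewrite mul0r.
Qed.

Lemma sum_card (A : {set 'I_d}) : \sum_k (k \in A)%:R = #|A|%:R :> R.
Proof.
rewrite -[#|A|%:R]/(1 *+ #|A|) -sumr_const.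
rewrite [RHS]big_mkcond; apply: eq_bigr => k _; by case: (k \in A).
Qed.

Lemma G_id I J : \sum_k (((m I == k)%:R - (k \in I)%:R) * ((m J == k)%:R - (k \in J)%:R))
  = #|I :&: J|%:R + T I J.
Proof.
have s1 : \sum_k (m I == k)%:R * (m J == k)%:R = (m I == m J)%:R :> R.
  by rewrite sum_eqmul eq_sym.
have s2 : \sum_k (m I == k)%:R * (k \in J)%:R = (m I \in J)%:R :> R.
  by rewrite sum_eqmul.
have s3 : \sum_k (k \in I)%:R * (m J == k)%:R = (m J \in I)%:R :> R.
  by rewrite -(sum_eqmul (m J) (fun k => (k \in I)%:R)); apply: eq_bigr => k _; rewrite mulrC.
have s4 : \sum_k (k \in I)%:R * (k \in J)%:R = #|I :&: J|%:R :> R.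
  rewrite -sum_card; apply: eq_bigr => k _; rewrite inE.
  by case: (k \in I); case: (k \in J); rewrite /= ?mul1r ?mul0r.
have -> : \sum_k (((m I == k)%:R - (k \in I)%:R) * ((m J == k)%:R - (k \in J)%:R))
  = \sum_k ((m I == k)%:R * (m J == k)%:R - (m I == k)%:R * (k \in J)%:R
   - (k \in I)%:R * (m J == k)%:R + (k \in I)%:R * (k \in J)%:R) :> R.
  by apply: eq_bigr => k _; ring.
rewrite big_split !sumrB /= s1 s2 s3 s4 /T; ring.
Qed.

Definition wv k : R := \sum_(I in B) (m I == k)%:R.
Definition av k : R := \sum_(I in B) (k \in I)%:R.
Definition Kc : R := \sum_(I in B) \sum_(J in B) #|I :&: J|%:R
   + \sum_(p | Cp p) (-1) + \sum_(p | Qp p) (-2/3).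

Lemma sq_id : \sum_k (wv k - av k) ^+ 2 = Kc.
Proof.
rewrite /Kc -addrA -sumT -big_split /=.
transitivity (\sum_k \sum_(I in B) \sum_(J in B)
   (((m I == k)%:R - (k \in I)%:R) * ((m J == k)%:R - (k \in J)%:R) : R)).
  apply: eq_bigr => k _; rewrite /wv /av -sumrB expr2 mulr_suml.
  apply: eq_bigr => I _; rewrite mulr_sumr; apply: eq_bigr => J _ //.
rewrite exchange_big /=; apply: eq_bigr => I _.
rewrite exchange_big /= -big_split /=; apply: eq_bigr => J _.
exact: G_id.
Qed.

End Core.
Section Geo.
Variables (R : realType) (d : nat) (c : 'rV[R]_d).

Definition lek (j i : 'I_d) := (c 0 j < c 0 i) || ((c 0 j == c 0 i) && (j <= i)%N).

Lemma lek_refl i : lek i i.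
Proof. by rewrite /lek eqxx leqnn orbT. Qed.

Lemma lek_total i j : lek j i || lek i j.
Proof.
rewrite /lek; case: (ltgtP (c 0 j) (c 0 i)) => //= _.
exact: leq_total.
Qed.

Lemma lek_trans i j k : lek j i -> lek i k -> lek j k.
Proof.
rewrite /lek => /orP [h1|/andP [/eqP e1 h1]] /orP [h2|/andP [/eqP e2 h2]].
- by rewrite (lt_trans h1 h2).
- by rewrite -e2 h1.
- by rewrite e1 h2.
- by rewrite e1 e2 eqxx (leq_trans h1 h2) orbT.
Qed.

Lemma lek_anti i j : lek j i -> lek i j -> i = j.
Proof.
rewrite /lek => /orP [h1|/andP [/eqP e1 h1]] /orP [h2|/andP [/eqP e2 h2]].
- by move: (lt_trans h1 h2); rewrite ltxx.
- by move: h1; rewrite e2 ltxx.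
- by move: h2; rewrite e1 ltxx.
- by apply/val_inj/eqP; rewrite eqn_leq h1 h2.
Qed.

Lemma seq_max (s : seq 'I_d) : s != [::] -> exists2 i, i \in s & forall j, j \in s -> lek j i.
Proof.
elim: s => // x s IH _.
case: s IH => [|y s] IH.
  by exists x; rewrite ?mem_seq1 // => j; rewrite mem_seq1 => /eqP ->; apply: lek_refl.
have [i iin imax] := IH isT.
case/orP: (lek_total i x) => h.
  exists i; first by rewrite inE iin orbT.
  move=> j; rewrite inE => /orP [/eqP ->|]; [exact: h|exact: imax].
exists x; first by rewrite inE eqxx.
move=> j; rewrite inE => /orP [/eqP ->|jin]; first exact: lek_refl.
exact: lek_trans (imax _ jin) h.
Qed.

Definition ismaxb (I : {set 'I_d}) i := (i \in I) && [forall j in I, lek j i].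

Lemma ismax_ex I : I != set0 -> exists i, ismaxb I i.
Proof.
move=> /set0Pn [x xI].
have [|i iin imax] := seq_max (s := enum I).
  by apply/eqP => h; have := mem_enum (mem I) x; rewrite h xI.
exists i; rewrite /ismaxb -mem_enum iin /=.
by apply/forall_inP => j jI; apply: imax; rewrite mem_enum.
Qed.

Lemma ismax_uniq I a b : ismaxb I a -> ismaxb I b -> a = b.
Proof.
move=> /andP [aI /forall_inP ha] /andP [bI /forall_inP hb].
by apply: lek_anti; [apply: ha | apply: hb].
Qed.

Variable i0 : 'I_d.
Definition mx (I : {set 'I_d}) : 'I_d := odflt i0 [pick i | ismaxb I i].

Lemma mxP I : I != set0 -> ismaxb I (mx I).
Proof.
move=> /ismax_ex [x hx]; rewrite /mx; case: pickP => //= h.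
by move: (h x); rewrite hx.
Qed.

Lemma mx_sub (I U : {set 'I_d}) : U != set0 -> I \subset U -> mx U \in I -> mx I = mx U.
Proof.
move=> U0 IU uI; have /andP [_ /forall_inP hU] := mxP U0.
have hI : ismaxb I (mx U).
  rewrite /ismaxb uI /=; apply/forall_inP => j jI; apply: hU.
  exact: (subsetP IU).
have I0 : I != set0 by apply/set0Pn; exists (mx U).
exact: ismax_uniq (mxP I0) hI.
Qed.

End Geo.

Section Vert.
Variables (R : realType) (d : nat).

Lemma lek_le (c : 'rV[R]_d) j i : lek c j i -> c 0 j <= c 0 i.
Proof. by rewrite /lek => /orP [/ltW|/andP [/eqP -> _]]. Qed.

Lemma dotv_sum (T : finType) (P : pred T) (F : T -> 'rV[R]_d) c :
  dotv c (\sum_(t | P t) F t) = \sum_(t | P t) dotv c (F t).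
Proof.
rewrite /dotv; under eq_bigr do rewrite summxE mulr_sumr.
exact: exchange_big.
Qed.

Lemma dotvZ c a (x : 'rV[R]_d) : dotv c (a *: x) = a * dotv c x.
Proof. by rewrite /dotv mulr_sumr; apply: eq_bigr => i _; rewrite mxE; ring. Qed.

Lemma ebasisE (i k : 'I_d) : @ebasis R d i 0 k = (k == i)%:R.
Proof. by rewrite /ebasis mxE eqxx. Qed.

Lemma dotv_e c (i : 'I_d) : dotv c (@ebasis R d i) = c 0 i.
Proof.
rewrite /dotv (bigD1 i) //= ebasisE eqxx mulr1 big1 ?addr0 // => k /negbTE h.
by rewrite ebasisE h mulr0.
Qed.

Variable i0 : 'I_d.

Lemma vertex_eq (B : {set {set 'I_d}}) (B0 : set0 \notin B) v :
  is_vertex (@nestohedron R d B) v ->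
  exists c : 'rV[R]_d, forall k, v 0 k = \sum_(I in B) (mx c i0 I == k)%:R.
Proof.
move=> [Pv [c hc]]; exists c.
have I0 : forall I, I \in B -> I != set0.
  by move=> I IB; apply/eqP => h; rewrite -h IB in B0.
set w := \sum_(I in B) @ebasis R d (mx c i0 I).
have Pw : nestohedron B w.
  exists (fun I => @ebasis R d (mx c i0 I)); split => // I IB.
  have /andP [mI _] := mxP c i0 (I0 I IB).
  exists (fun i => (i == mx c i0 I)%:R); split; first by move=> i _; exact: ler0n.
  split.
    rewrite (bigD1 (mx c i0 I)) //= eqxx big1 ?addr0 // => i /andP [_ /negbTE ->].
    by [].
  rewrite (bigD1 (mx c i0 I)) //= eqxx scale1r big1 ?addr0 // => i /andP [_ /negbTE ->].
  by rewrite scale0r.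
have dw : dotv c w = \sum_(I in B) c 0 (mx c i0 I).
  by rewrite /w dotv_sum; apply: eq_bigr => I _; apply: dotv_e.
have le : forall x, nestohedron B x -> dotv c x <= dotv c w.
  move=> x [p [hp ->]]; rewrite dw dotv_sum; apply: ler_sum => I IB.
  have [lam [l0 [l1 ->]]] := hp I IB.
  rewrite dotv_sum.
  under eq_bigr do rewrite dotvZ dotv_e.
  have /andP [mI /forall_inP mmax] := mxP c i0 (I0 I IB).
  apply: (@le_trans _ _ (\sum_(i in I) lam i * c 0 (mx c i0 I))).
    apply: ler_sum => i iI; apply: ler_wpM2l; first exact: l0.
    exact: lek_le (mmax i iI).
  by rewrite -mulr_suml l1 mul1r.
have vw : v = w.
  case: (eqVneq w v) => // ne.
  have h1 := hc w Pw (elimN eqP ne).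
  have h2 := le v Pv.
  by move: (lt_le_trans h1 h2); rewrite ltxx.
by move=> k; rewrite vw /w summxE; apply: eq_bigr => I _; rewrite ebasisE eq_sym.
Qed.

End Vert.

Theorem proposition4p22 (R : realType) (d : nat) (B : {set {set 'I_d}}) :
  building_set B -> triangle_closed B -> inscribed (@nestohedron R d B).
Proof.
move=> HB HT.
case: (boolP (set0 \in B)) => h0.
  exists 0, 0 => v [[p [hp _]] _].
  have [lam [_ [l1 _]]] := hp _ h0.
  by move: l1; rewrite big_set0 => /eqP; rewrite eq_sym oner_eq0.
case: d B HB HT h0 => [|n] B HB HT h0.
  by exists 0, 0 => v _; rewrite big_ord0 expr0n.
pose i0 : 'I_n.+1 := ord0.
exists (\row_k av R B k), (Num.sqrt (Kc R B)).
move=> v hv.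
have [c hc] := vertex_eq i0 h0 hv.
have I0 : forall I, I \in B -> I != set0.
  by move=> I IB; apply/eqP => h; rewrite -h IB in h0.
have Hm1 : forall I, I \in B -> mx c i0 I \in I.
  by move=> I IB; have /andP [] := mxP c i0 (I0 I IB).
have Hm2 : forall I U, I \in B -> U \in B -> I \subset U -> mx c i0 U \in I ->
    mx c i0 I = mx c i0 U.
  by move=> I U _ UB; apply: mx_sub; apply: I0.
have E := sq_id R Hm1 Hm2 HB HT.
have -> : \sum_i (v 0 i - (\row_k av R B k) 0 i) ^+ 2 =
          \sum_k (wv R B (mx c i0) k - av R B k) ^+ 2.
  by apply: eq_bigr => k _; rewrite hc mxE.
rewrite E sqr_sqrtr // -E; apply: sumr_ge0 => k _; exact: sqr_ge0.
Qed.
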